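(* Let $\lambda>0$, $A>0$, $B>0$, and for integers $N\ge0$ and $z\in\mathbb{C}$ with $\Re(z)>B$ let $$R_{fact}(\lambda,A,B,N,z)=\frac{A}{(\lambda B)^{\lambda B}}\,\frac{(N+\lambda B+1)^{N+\lambda B+1}}{(N+1)^N}\left|\frac{\Gamma(\lambda z)\Gamma(N+1)}{\Gamma(\lambda z+N+1)(\Re(z)-B)}\right|.$$ Then for fixed $z$ with $\Re(z)>B$, as $N\to+\infty$, $$R_{fact}(\lambda,A,B,N,z)\sim\frac{A\,e^{\lambda B(1-\ln(\lambda B))}}{N^{\lambda(\Re(z)-B)-1}}\,\frac{|\Gamma(\lambda z)|}{\Re(z)-B}.$$ *)

(* Defs.v *)
From Stdlib Require Import Reals.
From Coquelicot Require Import Coquelicot.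
Open Scope R_scope.

(* Euler Gamma function, defined for Re z > 0 by the (improper) Euler integral
   Gamma z = int_0^oo t^(z-1) e^(-t) dt, with t^(z-1) = t^(Re z - 1) * e^(i Im z ln t),
   split into real and imaginary parts. *)
Definition Gamma (z : C) : C :=
  (RInt_gen (fun t => Rpower t (Re z - 1) * cos (Im z * ln t) * exp (- t))
            (at_right 0) (Rbar_locally p_infty),
   RInt_gen (fun t => Rpower t (Re z - 1) * sin (Im z * ln t) * exp (- t))
            (at_right 0) (Rbar_locally p_infty)).

Definition R_fact (lam A B : R) (N : nat) (z : C) : R :=
  A / Rpower (lam * B) (lam * B)
  * (Rpower (INR N + lam * B + 1) (INR N + lam * B + 1) / (INR N + 1) ^ N)
  * Cmod (Cdiv (Cmult (Gamma (Cmult (RtoC lam) z)) (Gamma (RtoC (INR N + 1))))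
               (Cmult (Gamma (Cplus (Cmult (RtoC lam) z) (RtoC (INR N + 1))))
                      (RtoC (Re z - B)))).

(* Main.v *)
Require Import Defs.
From Stdlib Require Import Reals Lra Lia ZArith.
From Coquelicot Require Import Coquelicot.
Open Scope R_scope.

Notation F0 := (at_right 0).
Notation Finf := (Rbar_locally p_infty).
Definition IG (f : R -> R) (l : R) := is_RInt_gen f F0 Finf l.

Lemma ballR (x e y : R) : ball x e y <-> Rabs (y - x) < e.
Proof. reflexivity. Qed.

Lemma ev_pos : filter_prod F0 Finf (fun ab => 0 < fst ab < 1 /\ 1 < snd ab).
Proof.
  apply (Filter_prod F0 Finf _ (fun a => 0 < a < 1) (fun b => 1 < b)).
  - exists (mkposreal 1 Rlt_0_1). intros y Hy Hy0. rewrite ballR in Hy. simpl in Hy.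
    apply Rabs_def2 in Hy. lra.
  - exists 1. auto.
  - intros x y Hx Hy. simpl. auto.
Qed.

Lemma F0_pos : F0 (fun t => 0 < t).
Proof. exists (mkposreal 1 Rlt_0_1). intros y _ H; exact H. Qed.

Lemma sq0 {T} (F : (T -> Prop) -> Prop) {FF : Filter F} (f h : T -> R) :
  F (fun t => Rabs (f t) <= h t) -> filterlim h F (locally 0) -> filterlim f F (locally 0).
Proof.
  intros H1 H2. apply filterlim_locally. intros eps.
  generalize (proj1 (filterlim_locally h 0) H2 eps). intro H3.
  generalize (filter_and _ _ H1 H3). apply filter_imp.
  intros t [Ha Hb]. rewrite ballR in Hb |- *.
  rewrite Rminus_0_r in Hb |- *. apply Rabs_def2 in Hb. lra.
Qed.

Lemma cont_F0 (f : R -> R) : continuous f 0 -> filterlim f F0 (locally (f 0)).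
Proof. intro H. eapply filterlim_filter_le_1. apply filter_le_within. exact H. Qed.

Lemma lim_Rpower0 (a : R) : 0 < a -> filterlim (fun t => Rpower t a) F0 (locally 0).
Proof.
  intros Ha. apply filterlim_locally. intros eps.
  assert (Hd : 0 < Rpower eps (/ a)) by (unfold Rpower; apply exp_pos).
  exists (mkposreal _ Hd). intros y Hy Hy0. rewrite ballR in Hy |- *. simpl in Hy.
  rewrite Rminus_0_r in Hy |- *.
  assert (Hp : 0 < Rpower y a) by (unfold Rpower; apply exp_pos).
  rewrite Rabs_pos_eq by lra. apply Rabs_def2 in Hy.
  assert (ln y < ln (Rpower eps (/a))) by (apply ln_increasing; lra).
  unfold Rpower in H; rewrite ln_exp in H. unfold Rpower.
  replace (pos eps) with (exp (ln eps)) by (apply exp_ln; apply cond_pos).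
  apply exp_increasing.
  apply Rmult_lt_compat_l with (r := a) in H; auto.
  replace (a * (/ a * ln eps)) with (ln eps) in H by (field; lra). exact H.
Qed.

Lemma lim_expm (k : R) : 0 < k -> filterlim (fun t => exp (- (k * t))) Finf (locally 0).
Proof.
  intros Hk. apply filterlim_locally. intros eps.
  exists (- ln eps / k). intros x Hx. rewrite ballR, Rminus_0_r, Rabs_pos_eq by (left; apply exp_pos).
  replace (pos eps) with (exp (ln eps)) by (apply exp_ln; apply cond_pos).
  apply exp_increasing.
  apply Rmult_lt_compat_l with (r := k) in Hx; auto.
  replace (k * (- ln eps / k)) with (- ln eps) in Hx by (field; lra). lra.
Qed.

Lemma exRc (f : R -> R) a b :
  (forall z, Rmin a b <= z <= Rmax a b -> continuous f z) -> ex_RInt f a b.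
Proof. intro H. apply (ex_RInt_continuous (V := R_CompleteNormedModule)). exact H. Qed.

Lemma isRd (F f : R -> R) a b :
  (forall x, Rmin a b <= x <= Rmax a b -> is_derive F x (f x)) ->
  (forall x, Rmin a b <= x <= Rmax a b -> continuous f x) ->
  is_RInt f a b (F b - F a).
Proof. intros H1 H2. apply (is_RInt_derive (V := R_CompleteNormedModule)); auto. Qed.

Lemma RIc (f : R -> R) a b : ex_RInt f a b -> is_RInt f a b (RInt f a b).
Proof. intro H. apply (RInt_correct (V := R_CompleteNormedModule)). exact H. Qed.

Lemma lim_sub_prod (F : R -> R) la lb :
  filterlim F F0 (locally la) -> filterlim F Finf (locally lb) ->
  filterlim (fun ab => F (snd ab) - F (fst ab)) (filter_prod F0 Finf) (locally (lb - la)).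
Proof.
  intros Ha Hb. apply filterlim_locally. intros eps.
  assert (He : 0 < eps / 2) by (generalize (cond_pos eps); lra).
  generalize (proj1 (filterlim_locally F la) Ha (mkposreal _ He)). intro H1.
  generalize (proj1 (filterlim_locally F lb) Hb (mkposreal _ He)). intro H2.
  apply (Filter_prod _ _ _ _ _ H1 H2).
  intros x y Hx Hy. rewrite ballR in Hx, Hy |- *. simpl in *.
  apply Rabs_def2 in Hx. apply Rabs_def2 in Hy. apply Rabs_def1; lra.
Qed.

Lemma IG_FTC (f F : R -> R) la lb :
  (forall t, 0 < t -> is_derive F t (f t)) ->
  (forall t, 0 < t -> continuous f t) ->
  filterlim F F0 (locally la) -> filterlim F Finf (locally lb) ->
  IG f (lb - la).
Proof.
  intros Hd Hc Ha Hb. unfold IG, is_RInt_gen.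
  apply filterlimi_lim_ext_loc with (f := fun ab => F (snd ab) - F (fst ab)).
  - generalize ev_pos. apply filter_imp. intros [a b] [[Ha0 Ha1] Hb1]. simpl in *.
    apply (isRd F f a b).
    + intros x Hx. apply Hd. assert (0 < Rmin a b) by (apply Rmin_glb_lt; lra). lra.
    + intros x Hx. apply Hc. assert (0 < Rmin a b) by (apply Rmin_glb_lt; lra). lra.
  - apply lim_sub_prod; auto.
Qed.

Lemma RInt_bound (f g G : R -> R) x y :
  0 < x -> 0 < y ->
  (forall t, 0 < t -> continuous f t) ->
  (forall t, 0 < t -> continuous g t) ->
  (forall t, 0 < t -> is_derive G t (g t)) ->
  (forall t, 0 < t -> Rabs (f t) <= g t) ->
  Rabs (RInt f x y) <= Rabs (G y - G x).
Proof.
  intros Hx Hy Hcf Hcg Hd Hb.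
  assert (key : forall u v, 0 < u -> u <= v -> Rabs (RInt f u v) <= G v - G u).
  { intros u v Hu Huv.
    assert (Ef : ex_RInt f u v).
    { apply exRc. intros z Hz. apply Hcf. rewrite Rmin_left in Hz; lra. }
    assert (Eg : is_RInt g u v (G v - G u)).
    { apply isRd; intros z Hz; rewrite Rmin_left in Hz by lra.
      apply Hd; lra. apply Hcg; lra. }
    eapply Rle_trans. apply abs_RInt_le; auto.
    replace (G v - G u) with (RInt g u v).
    2:{ apply is_RInt_unique. exact Eg. }
    apply RInt_le; auto.
    - apply exRc. intros z Hz. rewrite Rmin_left in Hz by lra.
      apply continuous_comp. apply Hcf; lra. apply continuous_Rabs.
    - eexists; exact Eg.
    - intros z Hz. apply Hb. lra. }
  destruct (Rle_or_lt x y) as [H|H].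
  - eapply Rle_trans. apply key; auto. rewrite Rabs_pos_eq. lra.
    generalize (key x y Hx H). generalize (Rabs_pos (RInt f x y)). lra.
  - rewrite <- opp_RInt_swap.
    2:{ apply exRc. intros z Hz. apply Hcf.
        assert (0 < Rmin y x) by (apply Rmin_glb_lt; lra). lra. }
    change (Rabs (- RInt f y x) <= Rabs (G y - G x)).
    rewrite Rabs_Ropp. eapply Rle_trans. apply key; auto. lra.
    rewrite Rabs_minus_sym, Rabs_pos_eq. lra.
    generalize (key y x Hy (Rlt_le _ _ H)). generalize (Rabs_pos (RInt f y x)). lra.
Qed.

Lemma ex_cmp (f g G : R -> R) la lb :
  (forall t, 0 < t -> continuous f t) ->
  (forall t, 0 < t -> continuous g t) ->
  (forall t, 0 < t -> is_derive G t (g t)) ->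
  (forall t, 0 < t -> Rabs (f t) <= g t) ->
  filterlim G F0 (locally la) -> filterlim G Finf (locally lb) ->
  exists l, IG f l.
Proof.
  intros Hcf Hcg Hd Hb Ha Hb'.
  assert (PF : ProperFilter (filter_prod F0 Finf)).
  { apply filter_prod_proper. }
  destruct (proj1 (filterlim_locally_cauchy (F := filter_prod F0 Finf)
     (fun ab => RInt f (fst ab) (snd ab)))) as [l Hl].
  - intros eps.
    assert (He : 0 < eps / 4) by (generalize (cond_pos eps); lra).
    generalize (proj1 (filterlim_locally G la) Ha (mkposreal _ He)). intro H1.
    generalize (proj1 (filterlim_locally G lb) Hb' (mkposreal _ He)). intro H2.
    exists (fun ab => (0 < fst ab /\ ball la (eps/4) (G (fst ab))) /\
                 (0 < snd ab /\ ball lb (eps/4) (G (snd ab)))).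
    split.
    + apply (Filter_prod _ _ _ (fun a => 0 < a /\ ball la (eps/4) (G a))
                              (fun b => 0 < b /\ ball lb (eps/4) (G b))).
      * apply filter_and. apply F0_pos. exact H1.
      * apply filter_and. exists 0. auto. exact H2.
      * intros x y Hx Hy. simpl. auto.
    + intros [u1 u2] [v1 v2] [[Hu1 Bu1] [Hu2 Bu2]] [[Hv1 Bv1] [Hv2 Bv2]].
      simpl in *. rewrite ballR in *.
      assert (Ec : forall x y, 0 < x -> 0 < y -> ex_RInt f x y).
      { intros x y Hx Hy. apply exRc. intros z Hz. apply Hcf.
        assert (0 < Rmin x y) by (apply Rmin_glb_lt; lra). lra. }
      assert (E1 : RInt f v1 v2 = plus (RInt f v1 u1) (plus (RInt f u1 u2) (RInt f u2 v2))).
      { rewrite (RInt_Chasles f u1 u2 v2) by auto.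
        rewrite (RInt_Chasles f v1 u1 v2) by auto. reflexivity. }
      rewrite E1. change (Rabs (RInt f v1 u1 + (RInt f u1 u2 + RInt f u2 v2) - RInt f u1 u2) < eps).
      generalize (RInt_bound f g G v1 u1 Hv1 Hu1 Hcf Hcg Hd Hb).
      generalize (RInt_bound f g G u2 v2 Hu2 Hv2 Hcf Hcg Hd Hb).
      intros K1 K2.
      apply Rabs_def2 in Bu1. apply Rabs_def2 in Bu2. apply Rabs_def2 in Bv1. apply Rabs_def2 in Bv2.
      assert (Rabs (G u1 - G v1) < eps / 2) by (apply Rabs_def1; lra).
      assert (Rabs (G v2 - G u2) < eps / 2) by (apply Rabs_def1; lra).
      eapply Rle_lt_trans. 
      replace (RInt f v1 u1 + (RInt f u1 u2 + RInt f u2 v2) - RInt f u1 u2)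
        with (RInt f v1 u1 + RInt f u2 v2) by ring.
      apply Rabs_triang. lra.
  - exists l. unfold IG, is_RInt_gen.
    apply filterlimi_lim_ext_loc with (f := fun ab => RInt f (fst ab) (snd ab)); auto.
    generalize ev_pos. apply filter_imp. intros [a b] [[Ha0 Ha1] Hb1]. simpl in *.
    apply RIc. apply exRc. intros z Hz. apply Hcf.
    assert (0 < Rmin a b) by (apply Rmin_glb_lt; lra). lra.
Qed.

Definition cG (a b t : R) := Rpower t (a - 1) * cos (b * ln t) * exp (- t).
Definition sG (a b t : R) := Rpower t (a - 1) * sin (b * ln t) * exp (- t).

Lemma lim_plus {T} (F : (T -> Prop) -> Prop) {FF : Filter F} (f g : T -> R) x y :
  filterlim f F (locally x) -> filterlim g F (locally y) ->
  filterlim (fun t => f t + g t) F (locally (x + y)).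
Proof.
  intros H1 H2. eapply filterlim_comp_2; eauto.
  apply (filterlim_plus (K := R_AbsRing) (V := R_NormedModule) x y).
Qed.

Lemma lim_scal {T} (F : (T -> Prop) -> Prop) {FF : Filter F} (f : T -> R) k x :
  filterlim f F (locally x) -> filterlim (fun t => k * f t) F (locally (k * x)).
Proof.
  intros H1. eapply filterlim_comp_2; eauto. apply filterlim_const.
  apply (filterlim_mult (K := R_AbsRing) k x).
Qed.

Lemma lim_F0c (f : R -> R) l : continuous f 0 -> f 0 = l -> filterlim f F0 (locally l).
Proof. intros H <-. apply cont_F0, H. Qed.

Lemma IG_ext (f g : R -> R) l : (forall t, 0 < t -> f t = g t) -> IG f l -> IG g l.
Proof.
  intros H. apply is_RInt_gen_ext.
  generalize ev_pos. apply filter_imp. intros [a b] [[Ha _] Hb] x Hx. simpl in *.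
  apply H. assert (0 < Rmin a b) by (apply Rmin_glb_lt; lra). lra.
Qed.

Lemma IG_lin (f g : R -> R) lf lg al be :
  IG f lf -> IG g lg -> IG (fun t => al * f t + be * g t) (al * lf + be * lg).
Proof.
  intros H1 H2.
  assert (H3 := is_RInt_gen_scal (V := R_NormedModule) (Fa := F0) (Fb := Finf) f al lf H1).
  assert (H4 := is_RInt_gen_scal (V := R_NormedModule) (Fa := F0) (Fb := Finf) g be lg H2).
  exact (is_RInt_gen_plus _ _ _ _ H3 H4).
Qed.

Lemma IG_unique (f : R -> R) l : IG f l -> RInt_gen f F0 Finf = l.
Proof. intro H. apply (is_RInt_gen_unique (V := R_CompleteNormedModule)). exact H. Qed.

Lemma IG_RInt_gen (f : R -> R) l : IG f l -> IG f (RInt_gen f F0 Finf).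
Proof. intro H. rewrite (IG_unique f l H). exact H. Qed.

Lemma Rpower_m1 t a : 0 < t -> Rpower t (a - 1) = Rpower t a / t.
Proof.
  intro Ht. unfold Rpower. replace ((a - 1) * ln t) with (a * ln t + - ln t) by ring.
  rewrite exp_plus, exp_Ropp, exp_ln by auto. reflexivity.
Qed.

Lemma Rpower_pos t a : 0 < Rpower t a.
Proof. unfold Rpower; apply exp_pos. Qed.

Lemma nat_above (a : R) : exists n : nat, (1 <= n)%nat /\ a <= INR n.
Proof.
  destruct (Rle_or_lt a 0) as [H|H].
  - exists 1%nat. split. lia. simpl. lra.
  - destruct (archimed a) as [H1 _].
    exists (Z.to_nat (up a)). assert (0 < up a)%Z.
    { apply lt_IZR. simpl. lra. }
    split. lia. rewrite INR_IZR_INZ, Z2Nat.id by lia. lra.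
Qed.

Lemma A1 (t : R) (n : nat) : 0 < t -> (1 <= n)%nat -> (2 * INR n) ^ n * (t / (2 * INR n)) ^ n = t ^ n.
Proof. intros Ht Hn. assert (Hn' : 1 <= INR n) by (apply (le_INR 1); auto).
rewrite <- Rpow_mult_distr. f_equal. field. lra. Qed.
Lemma A2 (t : R) (n : nat) : (1 <= n)%nat -> exp (t / (2 * INR n)) ^ n = exp (/ 2 * t).
Proof. intros Hn. assert (Hn' : 1 <= INR n) by (apply (le_INR 1); auto).
rewrite <- (Rpower_pow n (exp (t / (2 * INR n)))) by apply exp_pos. unfold Rpower. rewrite ln_exp. f_equal. field. lra. Qed.
Lemma pow_le_exp (t : R) (n : nat) : 0 < t -> (1 <= n)%nat ->
  t ^ n <= (2 * INR n) ^ n * exp (/ 2 * t).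
Proof.
  intros Ht Hn. assert (Hn' : 1 <= INR n) by (apply (le_INR 1); auto).
  assert (Hx : t / (2 * INR n) <= exp (t / (2 * INR n))).
  { generalize (exp_ineq1_le (t / (2 * INR n))). lra. }
  rewrite <- (A1 t n Ht Hn), <- (A2 t n Hn).
  apply Rmult_le_compat_l. apply pow_le. lra.
  apply pow_incr. split. 2: exact Hx.
  unfold Rdiv. apply Rmult_le_pos. lra. left. apply Rinv_0_lt_compat. lra.
Qed.

Lemma Rpower_le1 t a : 0 < t <= 1 -> 0 <= a -> Rpower t a <= 1.
Proof.
  intros Ht Ha. unfold Rpower. rewrite <- exp_0.
  assert (ln t <= 0). { rewrite <- ln_1. destruct (Req_dec t 1). subst; lra. left; apply ln_increasing; lra. }
  destruct (Req_dec (a * ln t) 0) as [E|E]. rewrite E; lra.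
  left. apply exp_increasing.
  assert (a * ln t <= 0) by (rewrite <- (Rmult_0_r a); apply Rmult_le_compat_l; auto). lra.
Qed.

Lemma IG_val (f : R -> R) l l' : IG f l -> l = l' -> IG f l'.
Proof. intros H <-; exact H. Qed.

Lemma exp_m1 t a : 0 < t -> exp ((a - 1) * ln t) = exp (a * ln t) / t.
Proof. intro Ht. apply (Rpower_m1 t a Ht). Qed.

Lemma tae_bound a n t : 0 < a -> (1 <= n)%nat -> a <= INR n -> 0 < t ->
  Rpower t a * exp (- t) <= (1 + (2 * INR n) ^ n) * exp (- (/ 2 * t)).
Proof.
  intros Ha Hn Han Ht.
  assert (H1 : Rpower t a <= 1 + t ^ n).
  { destruct (Rle_or_lt t 1) as [H|H].
    - generalize (Rpower_le1 t a (conj Ht H) (Rlt_le _ _ Ha)). generalize (pow_le t n (Rlt_le _ _ Ht)). lra.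
    - generalize (Rle_Rpower t a (INR n) (Rlt_le _ _ H) Han). rewrite Rpower_pow by lra. lra. }
  assert (H2 := pow_le_exp t n Ht Hn).
  set (X := exp (- (/ 2 * t))).
  assert (E1 : exp (- t) = X * X) by (unfold X; rewrite <- exp_plus; f_equal; field).
  assert (E2 : exp (/ 2 * t) * X = 1) by (unfold X; rewrite <- exp_plus, <- exp_0; f_equal; field).
  assert (HX : 0 < X) by apply exp_pos.
  assert (HX1 : X <= 1) by (unfold X; rewrite <- exp_0; left; apply exp_increasing; lra).
  assert (HXX : X * X <= X) by (rewrite <- (Rmult_1_r X) at 3; apply Rmult_le_compat_l; lra).
  set (P := (2 * INR n) ^ n) in *.
  assert (HP : 0 <= P) by (apply pow_le; generalize (pos_INR n); lra).
  apply Rle_trans with ((1 + P * exp (/ 2 * t)) * exp (- t)).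
  { apply Rmult_le_compat_r. left; apply exp_pos. lra. }
  rewrite E1. 
  replace ((1 + P * exp (/ 2 * t)) * (X * X)) with (X * X + P * (exp (/ 2 * t) * X) * X) by ring.
  rewrite E2. lra.
Qed.

Lemma lim_scal0 {T} (F : (T -> Prop) -> Prop) {FF : Filter F} (f : T -> R) k :
  filterlim f F (locally 0) -> filterlim (fun t => k * f t) F (locally 0).
Proof. intro H. generalize (lim_scal F f k 0 H). rewrite Rmult_0_r. auto. Qed.

Lemma Finf_pos : Finf (fun t => 0 < t).
Proof. exists 0. auto. Qed.

Lemma tae0 a : 0 < a -> filterlim (fun t => Rpower t a * exp (- t)) F0 (locally 0).
Proof.
  intro Ha. apply (sq0 F0 _ (fun t => Rpower t a)). 2: apply lim_Rpower0; auto.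
  generalize F0_pos. apply filter_imp. intros t Ht.
  assert (exp (- t) <= 1) by (rewrite <- exp_0; left; apply exp_increasing; lra).
  generalize (Rpower_pos t a) (exp_pos (- t)). intros.
  rewrite Rabs_pos_eq by (apply Rmult_le_pos; lra).
  rewrite <- (Rmult_1_r (Rpower t a)) at 2. apply Rmult_le_compat_l; lra.
Qed.

Lemma taeinf a : 0 < a -> filterlim (fun t => Rpower t a * exp (- t)) Finf (locally 0).
Proof.
  intro Ha. destruct (nat_above a) as [n [Hn Han]].
  apply (sq0 Finf _ (fun t => (1 + (2 * INR n) ^ n) * exp (- (/ 2 * t)))).
  2: { apply (lim_scal0 Finf). apply lim_expm. apply Rinv_0_lt_compat; lra. }
  generalize Finf_pos. apply filter_imp. intros t Ht.
  generalize (Rpower_pos t a) (exp_pos (- t)). intros.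
  rewrite Rabs_pos_eq by (apply Rmult_le_pos; lra).
  apply tae_bound; auto.
Qed.

Lemma exdc (f : R -> R) x : ex_derive f x -> continuous f x.
Proof. intro H. apply (ex_derive_continuous (K := R_AbsRing) (V := R_NormedModule)). exact H. Qed.

Lemma cG_cont a b t : 0 < t -> continuous (cG a b) t.
Proof. intro Ht. apply exdc. unfold cG, Rpower. auto_derive. lra. Qed.
Lemma sG_cont a b t : 0 < t -> continuous (sG a b) t.
Proof. intro Ht. apply exdc. unfold sG, Rpower. auto_derive. lra. Qed.

Section Ex.
Variables (a b : R) (Ha : 0 < a) (n : nat) (Hn : (1 <= n)%nat) (Han : a <= INR n).
Let K := 1 + (2 * INR n) ^ n.
Let gg t := Rpower t (a - 1) * exp (- t) - Rpower t a * exp (- t) / a + K * exp (- (/ 2 * t)) / a.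
Let GG t := / a * (Rpower t a * exp (- t)) + (- 2 * K / a) * exp (- (/ 2 * t)).

Lemma gg_der t : 0 < t -> is_derive GG t (gg t).
Proof.
  intro Ht. unfold GG, gg, Rpower. auto_derive. lra.
  rewrite exp_m1 by lra. field. split; lra.
Qed.

Lemma gg_cont t : 0 < t -> continuous gg t.
Proof. intro Ht. apply exdc. unfold gg, Rpower. auto_derive. lra. Qed.

Lemma gg_bound t : 0 < t -> Rpower t (a - 1) * exp (- t) <= gg t.
Proof.
  intro Ht. unfold gg. generalize (tae_bound a n t Ha Hn Han Ht). fold K. intro H.
  assert (0 <= (K * exp (- (/ 2 * t)) - Rpower t a * exp (- t)) / a).
  { apply Rdiv_le_0_compat; lra. }
  unfold Rdiv in *. lra.
Qed.

Lemma GG_0 : filterlim GG F0 (locally (/ a * 0 + (- 2 * K / a) * exp (- (/ 2 * 0)))).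
Proof.
  apply (lim_plus F0). apply (lim_scal F0). apply tae0; auto. apply (lim_scal F0).
  apply lim_F0c; auto. apply exdc. auto_derive. auto.
Qed.

Lemma GG_inf : filterlim GG Finf (locally (/ a * 0 + (- 2 * K / a) * 0)).
Proof.
  apply (lim_plus Finf). apply (lim_scal Finf). apply taeinf; auto. apply (lim_scal Finf). apply lim_expm. apply Rinv_0_lt_compat; lra.
Qed.

Lemma ex_cG0 : exists l, IG (cG a b) l.
Proof.
  eapply (ex_cmp _ gg GG). apply cG_cont. apply gg_cont. apply gg_der.
  2: apply GG_0. 2: apply GG_inf.
  intros t Ht. eapply Rle_trans. 2: apply gg_bound; auto. unfold cG.
  generalize (Rpower_pos t (a - 1)) (exp_pos (- t)) (COS_bound (b * ln t)). intros.
  rewrite !Rabs_mult, (Rabs_pos_eq (Rpower _ _)), (Rabs_pos_eq (exp _)) by lra.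
  rewrite Rmult_assoc, (Rmult_comm (Rabs _)), <- Rmult_assoc.
  rewrite <- (Rmult_1_r (Rpower t (a - 1) * exp (- t))) at 2.
  apply Rmult_le_compat_l. apply Rmult_le_pos; lra. apply Rabs_le; lra.
Qed.

Lemma ex_sG0 : exists l, IG (sG a b) l.
Proof.
  eapply (ex_cmp _ gg GG). apply sG_cont. apply gg_cont. apply gg_der.
  2: apply GG_0. 2: apply GG_inf.
  intros t Ht. eapply Rle_trans. 2: apply gg_bound; auto. unfold sG.
  generalize (Rpower_pos t (a - 1)) (exp_pos (- t)) (SIN_bound (b * ln t)). intros.
  rewrite !Rabs_mult, (Rabs_pos_eq (Rpower _ _)), (Rabs_pos_eq (exp _)) by lra.
  rewrite Rmult_assoc, (Rmult_comm (Rabs _)), <- Rmult_assoc.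
  rewrite <- (Rmult_1_r (Rpower t (a - 1) * exp (- t))) at 2.
  apply Rmult_le_compat_l. apply Rmult_le_pos; lra. apply Rabs_le; lra.
Qed.
End Ex.

Lemma ex_cG a b : 0 < a -> exists l, IG (cG a b) l.
Proof. intro Ha. destruct (nat_above a) as [n [Hn Han]]. eapply ex_cG0; eauto. Qed.
Lemma ex_sG a b : 0 < a -> exists l, IG (sG a b) l.
Proof. intro Ha. destruct (nat_above a) as [n [Hn Han]]. eapply ex_sG0; eauto. Qed.

Lemma cG_S a b t : cG (a + 1) b t = Rpower t a * cos (b * ln t) * exp (- t).
Proof. unfold cG. replace (a + 1 - 1) with a by ring. reflexivity. Qed.
Lemma sG_S a b t : sG (a + 1) b t = Rpower t a * sin (b * ln t) * exp (- t).
Proof. unfold sG. replace (a + 1 - 1) with a by ring. reflexivity. Qed.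

Lemma bnd_trig a t x : 0 < t -> -1 <= x <= 1 ->
  Rabs (Rpower t a * x * exp (- t)) <= Rpower t a * exp (- t).
Proof.
  intros Ht Hx. generalize (Rpower_pos t a) (exp_pos (- t)). intros.
  rewrite !Rabs_mult, (Rabs_pos_eq (Rpower _ _)), (Rabs_pos_eq (exp _)) by lra.
  rewrite Rmult_assoc, (Rmult_comm (Rabs _)), <- Rmult_assoc.
  rewrite <- (Rmult_1_r (Rpower t a * exp (- t))) at 2.
  apply Rmult_le_compat_l. apply Rmult_le_pos; lra. apply Rabs_le; lra.
Qed.

Lemma lim_trig a (x : R -> R) : 0 < a -> (forall t, -1 <= x t <= 1) ->
  filterlim (fun t => Rpower t a * x t * exp (- t)) F0 (locally 0) /\
  filterlim (fun t => Rpower t a * x t * exp (- t)) Finf (locally 0).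
Proof.
  intros Ha Hx. split.
  - apply (sq0 F0 _ (fun t => Rpower t a * exp (- t))). 2: apply tae0; auto.
    generalize F0_pos. apply filter_imp. intros t Ht. apply bnd_trig; auto.
  - apply (sq0 Finf _ (fun t => Rpower t a * exp (- t))). 2: apply taeinf; auto.
    generalize Finf_pos. apply filter_imp. intros t Ht. apply bnd_trig; auto.
Qed.

Lemma FE a b Cr Ci : 0 < a -> IG (cG a b) Cr -> IG (sG a b) Ci ->
  IG (cG (a + 1) b) (a * Cr - b * Ci) /\ IG (sG (a + 1) b) (a * Ci + b * Cr).
Proof.
  intros Ha Hc Hs.
  set (f1 := fun t => a * cG a b t + (- b) * sG a b t + (-1) * (Rpower t a * cos (b * ln t) * exp (- t))).
  set (f2 := fun t => a * sG a b t + b * cG a b t + (-1) * (Rpower t a * sin (b * ln t) * exp (- t))).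
  destruct (lim_trig a (fun t => cos (b * ln t)) Ha (fun t => COS_bound _)) as [L1 L2].
  destruct (lim_trig a (fun t => sin (b * ln t)) Ha (fun t => SIN_bound _)) as [L3 L4].
  assert (H1 : IG f1 (0 - 0)).
  { apply (IG_FTC f1 (fun t => Rpower t a * cos (b * ln t) * exp (- t))); auto.
    - intros t Ht. unfold f1, cG, sG, Rpower. auto_derive. lra.
      rewrite exp_m1 by lra. field. lra.
    - intros t Ht. apply exdc. unfold f1, cG, sG, Rpower. auto_derive. lra. }
  assert (H2 : IG f2 (0 - 0)).
  { apply (IG_FTC f2 (fun t => Rpower t a * sin (b * ln t) * exp (- t))); auto.
    - intros t Ht. unfold f2, cG, sG, Rpower. auto_derive. lra.
      rewrite exp_m1 by lra. field. lra.
    - intros t Ht. apply exdc. unfold f2, cG, sG, Rpower. auto_derive. lra. }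
  split.
  - generalize (IG_lin _ _ _ _ 1 (-1) (IG_lin _ _ _ _ a (- b) Hc Hs) H1). intro H.
    apply IG_val with (1 * (a * Cr + - b * Ci) + -1 * (0 - 0)). 2: ring.
    revert H. apply IG_ext. intros t Ht. rewrite cG_S. unfold f1. ring.
  - generalize (IG_lin _ _ _ _ 1 (-1) (IG_lin _ _ _ _ a b Hs Hc) H2). intro H.
    apply IG_val with (1 * (a * Ci + b * Cr) + -1 * (0 - 0)). 2: ring.
    revert H. apply IG_ext. intros t Ht. rewrite sG_S. unfold f2. ring.
Qed.

Lemma IG_exp : IG (fun t => exp (- t)) 1.
Proof.
  apply IG_val with (0 - (-1)). 2: ring.
  apply (IG_FTC _ (fun t => (-1) * exp (- (1 * t)))).
  - intros t Ht. auto_derive. auto. ring_simplify. f_equal. f_equal. ring.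
  - intros t Ht. apply exdc. auto_derive. auto.
  - apply lim_F0c. apply exdc. auto_derive. auto. rewrite Rmult_0_r, Ropp_0, exp_0. ring.
  - apply (lim_scal0 Finf). apply lim_expm. lra.
Qed.

Lemma IG_zero : IG (fun _ => 0) 0.
Proof.
  apply IG_val with (0 - 0). 2: ring.
  apply (IG_FTC _ (fun _ => 0)).
  - intros t Ht. auto_derive. auto. ring.
  - intros t Ht. apply continuous_const.
  - apply filterlim_const.
  - apply filterlim_const.
Qed.

Lemma Gam_nat k : IG (cG (INR k + 1) 0) (INR (Factorial.fact k)) /\ IG (sG (INR k + 1) 0) 0.
Proof.
  induction k as [|k [IH1 IH2]].
  - simpl INR. simpl Factorial.fact. rewrite Rplus_0_l. split.
    + generalize IG_exp. apply IG_ext. intros t Ht. unfold cG.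
      rewrite Rminus_diag, Rpower_O, Rmult_0_l, cos_0 by auto. ring.
    + generalize IG_zero. apply IG_ext. intros t Ht. unfold sG.
      rewrite Rmult_0_l, sin_0. ring.
  - assert (Hp : 0 < INR k + 1) by (generalize (pos_INR k); lra).
    destruct (FE _ _ _ _ Hp IH1 IH2) as [H1 H2].
    rewrite S_INR. split.
    + apply IG_val with ((INR k + 1) * INR (Factorial.fact k) - 0 * 0). exact H1.
      rewrite fact_simpl, mult_INR, S_INR. ring.
    + apply IG_val with ((INR k + 1) * 0 + 0 * INR (Factorial.fact k)). exact H2. ring.
Qed.

Lemma IG_pow k : IG (fun t => t ^ k * exp (- t)) (INR (Factorial.fact k)).
Proof.
  destruct (Gam_nat k) as [H _]. revert H. apply IG_ext. intros t Ht. unfold cG.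
  replace (INR k + 1 - 1) with (INR k) by ring.
  rewrite Rpower_pow, Rmult_0_l, cos_0 by auto. ring.
Qed.

Lemma sin_abs_le z : Rabs (sin z) <= Rabs z.
Proof.
  assert (Hp : forall z, 0 <= z -> Rabs (sin z) <= z).
  { intros x Hx. destruct (Req_dec x 0) as [E|E]. subst. rewrite sin_0, Rabs_R0. lra.
    assert (sin x < x) by (apply sin_lt_x; lra).
    destruct (Rle_or_lt 1 x).
    - generalize (SIN_bound x). intros. apply Rabs_le. lra.
    - assert (0 < sin x). { apply sin_gt_0. lra. generalize PI_RGT_0 PI2_3_2. lra. }
      rewrite Rabs_pos_eq; lra. }
  destruct (Rle_or_lt 0 z).
  - rewrite (Rabs_pos_eq z) by lra. apply Hp; lra.
  - rewrite (Rabs_left z) by lra. rewrite <- Rabs_Ropp, <- sin_neg. apply Hp. lra.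
Qed.

Lemma lip_aux A B z : Rabs A = 2 -> Rabs B <= 1 -> Rabs (A * sin (z / 2) * B) <= Rabs z.
Proof.
  intros HA HB. rewrite !Rabs_mult, HA. generalize (sin_abs_le (z / 2)). intro H.
  assert (E : Rabs z = 2 * Rabs (z / 2) * 1).
  { rewrite Rmult_1_r. rewrite <- (Rabs_pos_eq 2) at 1 by lra. rewrite <- Rabs_mult. f_equal. field. }
  rewrite E. apply Rmult_le_compat. apply Rmult_le_pos. lra. apply Rabs_pos. apply Rabs_pos.
  apply Rmult_le_compat_l. lra. exact H. exact HB.
Qed.

Lemma cos_lip x y : Rabs (cos x - cos y) <= Rabs (x - y).
Proof.
  rewrite form2. apply lip_aux. rewrite Rabs_left; lra.
  generalize (SIN_bound ((x + y) / 2)). intro. apply Rabs_le; lra.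
Qed.

Lemma sin_lip x y : Rabs (sin x - sin y) <= Rabs (x - y).
Proof.
  rewrite form4. replace (2 * cos ((x + y) / 2) * sin ((x - y) / 2)) with
    (2 * sin ((x - y) / 2) * cos ((x + y) / 2)) by ring.
  apply lip_aux. rewrite Rabs_pos_eq; lra.
  generalize (COS_bound ((x + y) / 2)). intro. apply Rabs_le; lra.
Qed.

Section PW.
Variables (a b : R) (Ha : 0 < a) (m : nat) (Ham : a <= INR m).
Definition CC := 6 + 2 * a + 2 * Rabs b.

Lemma PW u x y : 0 < u -> Rabs (x - y) <= Rabs (b * ln u) -> Rabs (x - y) <= 2 -> Rabs y <= 1 ->
  Rabs (Rpower u a * x - y) <= CC * Rabs (u - 1) * (1 + u ^ m).
Proof.
  intros Hu H1 H2 H3.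
  assert (Hpa := Rpower_pos u a).
  assert (Hum : 0 <= u ^ m) by (apply pow_le; lra).
  assert (Hab : 0 <= Rabs b) by apply Rabs_pos.
  unfold CC.
  assert (T : Rabs (Rpower u a * x - y) <= Rpower u a * Rabs (x - y) + Rabs (Rpower u a - 1)).
  { replace (Rpower u a * x - y) with (Rpower u a * (x - y) + (Rpower u a - 1) * y) by ring.
    eapply Rle_trans. apply Rabs_triang. rewrite !Rabs_mult, (Rabs_pos_eq (Rpower u a)) by lra.
    apply Rplus_le_compat_l. rewrite <- (Rmult_1_r (Rabs (Rpower u a - 1))) at 2.
    apply Rmult_le_compat_l. apply Rabs_pos. exact H3. }
  rewrite Rabs_mult in H1.
  destruct (Rle_or_lt 1 u) as [Hu1|Hu1].
  - assert (Hl0 : 0 <= ln u) by (rewrite <- ln_1; destruct (Req_dec u 1); [subst; lra| left; apply ln_increasing; lra]).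
    assert (Hl1 : ln u <= u - 1) by (generalize (exp_ineq1_le (ln u)); rewrite exp_ln by lra; lra).
    assert (Hpm : Rpower u a <= u ^ m) by (rewrite <- Rpower_pow by lra; apply Rle_Rpower; lra).
    assert (Hr1 : Rpower u a - 1 <= a * ln u * Rpower u a).
    { generalize (exp_ineq1_le (- (a * ln u))). intro E.
      assert (E2 : exp (- (a * ln u)) * Rpower u a = 1).
      { unfold Rpower. rewrite <- exp_plus, <- exp_0. f_equal. ring. }
      assert ((1 + - (a * ln u)) * Rpower u a <= 1).
      { rewrite <- E2. apply Rmult_le_compat_r; lra. }
      lra. }
    assert (Hr0 : 1 <= Rpower u a).
    { rewrite <- (Rpower_O u) by lra. apply Rle_Rpower; lra. }
    rewrite (Rabs_pos_eq (Rpower u a - 1)) in T by lra.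
    rewrite (Rabs_pos_eq (ln u)) in H1 by lra.
    rewrite (Rabs_pos_eq (u - 1)) by lra.
    assert (K1 : Rpower u a * Rabs (x - y) <= Rabs b * ((u - 1) * u ^ m)).
    { apply Rle_trans with (Rpower u a * (Rabs b * ln u)).
      apply Rmult_le_compat_l; lra.
      rewrite (Rmult_comm (Rpower u a)), Rmult_assoc. apply Rmult_le_compat_l. lra.
      apply Rmult_le_compat; lra. }
    assert (K2 : a * ln u * Rpower u a <= a * ((u - 1) * u ^ m)).
    { rewrite Rmult_assoc. apply Rmult_le_compat_l. lra.
      apply Rmult_le_compat; lra. }
    assert (K3 : 0 <= (u - 1) * u ^ m) by (apply Rmult_le_pos; lra).
    assert (K4 : (a + Rabs b) * ((u - 1) * u ^ m) <= (6 + 2 * a + 2 * Rabs b) * ((u - 1) * u ^ m))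
      by (apply Rmult_le_compat_r; lra).
    assert (K5 : 0 <= (6 + 2 * a + 2 * Rabs b) * (u - 1)) by (apply Rmult_le_pos; lra).
    replace ((6 + 2 * a + 2 * Rabs b) * (u - 1) * (1 + u ^ m)) with
      ((6 + 2 * a + 2 * Rabs b) * (u - 1) + (6 + 2 * a + 2 * Rabs b) * ((u - 1) * u ^ m)) by ring.
    lra.
  - rewrite (Rabs_left (u - 1)) by lra.
    assert (Hle1 : Rpower u a <= 1) by (apply Rpower_le1; lra).
    assert (K0 : (6 + 2 * a + 2 * Rabs b) * - (u - 1) <= (6 + 2 * a + 2 * Rabs b) * - (u - 1) * (1 + u ^ m)).
    { rewrite <- (Rmult_1_r ((6 + 2 * a + 2 * Rabs b) * - (u - 1))) at 1.
      apply Rmult_le_compat_l. apply Rmult_le_pos; lra. lra. }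
    eapply Rle_trans. exact T. eapply Rle_trans. 2: exact K0.
    destruct (Rle_or_lt (/ 2) u) as [Hu2|Hu2].
    + assert (Hl0 : ln u < 0) by (rewrite <- ln_1; apply ln_increasing; lra).
      assert (Hl1 : - ln u <= 2 * (1 - u)).
      { generalize (exp_ineq1_le (- ln u)). rewrite exp_Ropp, exp_ln by lra. intro E.
        assert (/ u <= 2) by (rewrite <- (Rinv_inv 2); apply Rinv_le_contravar; lra).
        assert (/ u - 1 = (1 - u) * / u) by (field; lra).
        assert ((1 - u) * / u <= (1 - u) * 2) by (apply Rmult_le_compat_l; lra). lra. }
      assert (Hr : 1 - Rpower u a <= a * - ln u).
      { generalize (exp_ineq1_le (a * ln u)). unfold Rpower. lra. }
      rewrite (Rabs_left1 (Rpower u a - 1)) by lra.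
      rewrite (Rabs_left (ln u)) in H1 by lra.
      assert (K1 : Rpower u a * Rabs (x - y) <= Rabs b * - ln u).
      { apply Rle_trans with (1 * Rabs (x - y)). apply Rmult_le_compat_r. apply Rabs_pos. lra. lra. }
      assert (Rabs b * - ln u <= Rabs b * (2 * (1 - u))) by (apply Rmult_le_compat_l; lra).
      assert (a * - ln u <= a * (2 * (1 - u))) by (apply Rmult_le_compat_l; lra).
      assert (0 <= Rabs b * (1 - u)) by (apply Rmult_le_pos; lra).
      assert (0 <= a * (1 - u)) by (apply Rmult_le_pos; lra).
      lra.
    + assert (K1 : Rpower u a * Rabs (x - y) <= 2).
      { apply Rle_trans with (1 * 2). apply Rmult_le_compat; try lra. apply Rabs_pos. lra. }
      assert (Rabs (Rpower u a - 1) <= 1) by (apply Rabs_le; lra).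
      assert (0 <= Rabs b * (1 - u)) by (apply Rmult_le_pos; lra).
      assert (0 <= a * (1 - u)) by (apply Rmult_le_pos; lra).
      lra.
Qed.

Lemma amgm v d : 0 < d -> 2 * Rabs v <= d + v ^ 2 / d.
Proof.
  intro Hd. assert (0 <= (d - Rabs v) ^ 2 / d) by (apply Rdiv_le_0_compat; [apply pow2_ge_0 | lra]).
  replace ((d - Rabs v) ^ 2 / d) with (d - 2 * Rabs v + Rabs v ^ 2 / d) in H by (field; lra).
  assert (E : Rabs v ^ 2 = v ^ 2) by (rewrite RPow_abs, Rabs_pos_eq by apply pow2_ge_0; reflexivity).
  rewrite E in H. lra.
Qed.

Lemma PW2 u x y d : 0 < u -> 0 < d -> Rabs (x - y) <= Rabs (b * ln u) -> Rabs (x - y) <= 2 -> Rabs y <= 1 ->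
  Rabs (Rpower u a * x - y) <= CC / 2 * (d + (u - 1) ^ 2 / d) * (1 + u ^ m).
Proof.
  intros Hu Hd H1 H2 H3. eapply Rle_trans. apply PW; auto.
  assert (0 <= 1 + u ^ m) by (generalize (pow_le u m); lra).
  assert (0 < CC) by (unfold CC; generalize (Rabs_pos b); lra).
  generalize (amgm (u - 1) d Hd). intro.
  apply Rmult_le_compat_r. auto.
  replace (CC / 2 * (d + (u - 1) ^ 2 / d)) with (CC * ((d + (u - 1) ^ 2 / d) / 2)) by (field; lra).
  apply Rmult_le_compat_l. lra. lra.
Qed.
End PW.

Definition MM (N j : nat) := INR (Factorial.fact (N + j)) / (INR (Factorial.fact N) * INR N ^ j).

Lemma IG_T N j : (1 <= N)%nat ->
  IG (fun t => t ^ N * (t / INR N) ^ j * exp (- t)) (INR (Factorial.fact N) * MM N j).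
Proof.
  intro HN. assert (HNr : 0 < INR N) by (apply lt_0_INR; lia).
  generalize (IG_lin _ _ _ _ (/ INR N ^ j) 0 (IG_pow (N + j)) IG_zero). intro H.
  apply IG_val with (/ INR N ^ j * INR (Factorial.fact (N + j)) + 0 * 0).
  - revert H. apply IG_ext. intros t Ht. rewrite pow_add. unfold Rdiv.
    rewrite Rpow_mult_distr, pow_inv. ring.
  - unfold MM. field. split. apply pow_nonzero. lra. apply INR_fact_neq_0.
Qed.

Lemma rw1 (T : R -> R) a b N u : 0 < INR N -> 0 < u ->
  Rpower (INR N * u) (a + INR N + 1 - 1) * T (b * ln (INR N * u)) * exp (- (INR N * u)) =
  Rpower (INR N) a * ((INR N * u) ^ N * exp (- (INR N * u))) * (Rpower u a * T (b * ln (INR N) + b * ln u)).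
Proof.
  intros HN Hu. replace (a + INR N + 1 - 1) with (INR N + a) by ring.
  rewrite Rpower_plus, Rpower_pow by (apply Rmult_lt_0_compat; lra).
  rewrite <- (Rpower_mult_distr (INR N) u a) by lra.
  rewrite ln_mult by lra. rewrite Rmult_plus_distr_l. ring.
Qed.

Section Est.
Variables (a b : R) (Ha : 0 < a) (m : nat) (Ham : a <= INR m) (T : R -> R)
  (HT1 : forall x y, Rabs (T x - T y) <= Rabs (x - y)) (HT2 : forall x, Rabs (T x) <= 1)
  (N : nat) (HN : (1 <= N)%nat) (d : R) (Hd : 0 < d) (R1 : R)
  (HR : IG (fun t => Rpower t (a + INR N + 1 - 1) * T (b * ln t) * exp (- t)) R1).

Let Tj j t := t ^ N * (t / INR N) ^ j * exp (- t).
Let vj j := INR (Factorial.fact N) * MM N j.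

Definition EE := CC a b / 2 * (d * (MM N 0 + MM N m) +
   (MM N 2 - 2 * MM N 1 + MM N 0 + MM N (m + 2) - 2 * MM N (m + 1) + MM N m) / d).

Lemma est : Rabs (R1 - Rpower (INR N) a * T (b * ln (INR N)) * INR (Factorial.fact N))
   <= Rpower (INR N) a * INR (Factorial.fact N) * EE.
Proof.
  assert (HNr : 0 < INR N) by (apply lt_0_INR; lia).
  set (c := Rpower (INR N) a * T (b * ln (INR N))).
  generalize (IG_lin _ _ _ _ 1 (- c) HR (IG_pow N)). intro Hh.
  generalize (IG_T N 0 HN) (IG_T N 1 HN) (IG_T N 2 HN) (IG_T N m HN) (IG_T N (m + 1) HN) (IG_T N (m + 2) HN).
  intros I0 I1 I2 Im Im1 Im2.
  generalize (IG_lin _ _ _ _ 1 1 I0 Im). intro G1.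
  generalize (IG_lin _ _ _ _ 1 (-2) I2 I1). intro G2.
  generalize (IG_lin _ _ _ _ 1 1 G2 I0). intro G3.
  generalize (IG_lin _ _ _ _ 1 (-2) Im2 Im1). intro G4.
  generalize (IG_lin _ _ _ _ 1 1 G4 Im). intro G5.
  generalize (IG_lin _ _ _ _ 1 1 G3 G5). intro G6.
  generalize (IG_lin _ _ _ _ d (/ d) G1 G6). intro G7.
  generalize (IG_lin _ _ _ _ (Rpower (INR N) a * (CC a b / 2)) 0 G7 IG_zero). intro G8.
  clear G1 G2 G3 G4 G5 G6 G7.
  match type of Hh with IG ?f _ => set (hf := f) in Hh end.
  match type of G8 with IG ?f _ => set (gb := f) in G8 end.
  assert (PT : forall x, 0 < x -> Rabs (hf x) <= gb x).
  { intros x Hx. unfold hf, gb, c. cbv beta.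
    set (u := x / INR N). assert (Hu : 0 < u) by (unfold u; apply Rdiv_lt_0_compat; lra).
    assert (Hx' : x = INR N * u) by (unfold u; field; lra). clearbody u. subst x.
    replace (INR N * u / INR N) with u by (field; lra).
    rewrite rw1 by auto.
    set (P := Rpower (INR N) a * ((INR N * u) ^ N * exp (- (INR N * u)))).
    assert (HP : 0 <= P).
    { unfold P. apply Rmult_le_pos. left; apply Rpower_pos. apply Rmult_le_pos.
      apply pow_le. apply Rmult_le_pos; lra. left; apply exp_pos. }
    replace (1 * (P * (Rpower u a * T (b * ln (INR N) + b * ln u))) +
      - (Rpower (INR N) a * T (b * ln (INR N))) * ((INR N * u) ^ N * exp (- (INR N * u))))
      with (P * (Rpower u a * T (b * ln (INR N) + b * ln u) - T (b * ln (INR N)))) by (unfold P; ring).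
    rewrite Rabs_mult, (Rabs_pos_eq P) by exact HP.
    rewrite !pow_add.
    replace (Rpower (INR N) a * (CC a b / 2) *
      (d * (1 * ((INR N * u) ^ N * u ^ 0 * exp (- (INR N * u))) +
            1 * ((INR N * u) ^ N * u ^ m * exp (- (INR N * u)))) +
       / d * (1 * (1 * (1 * ((INR N * u) ^ N * u ^ 2 * exp (- (INR N * u))) +
                        -2 * ((INR N * u) ^ N * u ^ 1 * exp (- (INR N * u)))) +
                   1 * ((INR N * u) ^ N * u ^ 0 * exp (- (INR N * u)))) +
              1 * (1 * (1 * ((INR N * u) ^ N * (u ^ m * u ^ 2) * exp (- (INR N * u))) +
                        -2 * ((INR N * u) ^ N * (u ^ m * u ^ 1) * exp (- (INR N * u)))) +
                   1 * ((INR N * u) ^ N * u ^ m * exp (- (INR N * u)))))) + 0 * 0)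
      with (P * (CC a b / 2 * (d + (u - 1) ^ 2 / d) * (1 + u ^ m))) by (unfold P, Rdiv; ring).
    apply Rmult_le_compat_l. exact HP.
    apply PW2; auto.
    - eapply Rle_trans. apply HT1. right. f_equal. ring.
    - eapply Rle_trans. apply Rabs_triang. rewrite Rabs_Ropp.
      generalize (HT2 (b * ln (INR N) + b * ln u)) (HT2 (b * ln (INR N))). lra. }
  assert (F1 : filter_prod F0 Finf (fun ab => fst ab <= snd ab)).
  { generalize ev_pos. apply filter_imp. intros [p q] H. simpl in *. lra. }
  assert (F2 : filter_prod F0 Finf (fun ab => forall x, fst ab <= x <= snd ab -> norm (hf x) <= gb x)).
  { generalize ev_pos. apply filter_imp. intros [p q] H x Hx. simpl in *. apply PT. lra. }
  assert (Hle := RInt_gen_norm (V := R_CompleteNormedModule) (Fa := F0) (Fb := Finf) _ _ _ _ F1 F2 Hh G8).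
  change (norm ?x) with (Rabs x) in Hle.
  eapply Rle_trans. 2: eapply Rle_trans. 2: exact Hle.
  - right. f_equal. unfold c. ring.
  - right. unfold EE. unfold Rdiv. ring.
Qed.
End Est.

Lemma lim_invn : is_lim_seq (fun n => / INR n) 0.
Proof.
  generalize (is_lim_seq_inv _ _ is_lim_seq_INR). simpl. intro H. apply H. discriminate.
Qed.

Lemma lim_ratio c : is_lim_seq (fun N => (INR N + c) / INR N) 1.
Proof.
  apply is_lim_seq_ext_loc with (fun N => 1 + c * / INR N).
  - exists 1%nat. intros n Hn. assert (0 < INR n) by (apply lt_0_INR; lia). field. lra.
  - replace (Finite 1) with (Finite (1 + c * 0)) by (f_equal; ring).
    apply is_lim_seq_plus'. apply is_lim_seq_const. apply is_lim_seq_mult'.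
    apply is_lim_seq_const. apply lim_invn.
Qed.

Lemma MM_S N j : (1 <= N)%nat -> MM N (S j) = MM N j * ((INR N + INR (S j)) / INR N).
Proof.
  intro HN. assert (0 < INR N) by (apply lt_0_INR; lia). unfold MM.
  rewrite Nat.add_succ_r, fact_simpl, mult_INR, S_INR, plus_INR. simpl pow.
  rewrite S_INR. field. repeat split; try apply pow_nonzero; try apply INR_fact_neq_0; lra.
Qed.

Lemma MM_lim j : is_lim_seq (fun N => MM N j) 1.
Proof.
  induction j as [|j IH].
  - apply is_lim_seq_ext with (fun _ => 1). intros N. unfold MM.
    rewrite Nat.add_0_r. simpl. field. apply INR_fact_neq_0. apply is_lim_seq_const.
  - apply is_lim_seq_ext_loc with (fun N => MM N j * ((INR N + INR (S j)) / INR N)).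
    + exists 1%nat. intros n Hn. symmetry. apply MM_S. auto.
    + replace (Finite 1) with (Finite (1 * 1)) by (f_equal; ring).
      apply is_lim_seq_mult'. exact IH. apply lim_ratio.
Qed.

Lemma EE_lim a b m d : 0 < d -> is_lim_seq (fun N => EE a b m N d) (CC a b * d).
Proof.
  intro Hd.
  assert (S1 := is_lim_seq_plus' _ _ _ _ (MM_lim 0) (MM_lim m)).
  assert (S2 := is_lim_seq_mult' (fun _ => d) _ d _ (is_lim_seq_const d) S1).
  assert (T1 := is_lim_seq_mult' (fun _ => 2) _ 2 _ (is_lim_seq_const 2) (MM_lim 1)).
  assert (T2 := is_lim_seq_minus' _ _ _ _ (MM_lim 2) T1).
  assert (T3 := is_lim_seq_plus' _ _ _ _ T2 (MM_lim 0)).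
  assert (T4 := is_lim_seq_plus' _ _ _ _ T3 (MM_lim (m + 2))).
  assert (T5 := is_lim_seq_mult' (fun _ => 2) _ 2 _ (is_lim_seq_const 2) (MM_lim (m + 1))).
  assert (T6 := is_lim_seq_minus' _ _ _ _ T4 T5).
  assert (T7 := is_lim_seq_plus' _ _ _ _ T6 (MM_lim m)).
  assert (T8 := is_lim_seq_mult' _ (fun _ => / d) _ (/ d) T7 (is_lim_seq_const (/ d))).
  assert (S3 := is_lim_seq_plus' _ _ _ _ S2 T8).
  assert (S4 := is_lim_seq_mult' (fun _ => CC a b / 2) _ _ _ (is_lim_seq_const (CC a b / 2)) S3).
  clear S1 S2 T1 T2 T3 T4 T5 T6 T7 T8 S3.
  replace (CC a b * d) with (CC a b / 2 * (d * (1 + 1) + (1 - 2 * 1 + 1 + 1 - 2 * 1 + 1) * / d)) by (field; lra).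
  revert S4. apply is_lim_seq_ext. intro n. unfold EE, Rdiv. reflexivity.
Qed.

Lemma PQ_lim a b (Ha : 0 < a) (T : R -> R)
  (HT1 : forall x y, Rabs (T x - T y) <= Rabs (x - y)) (HT2 : forall x, Rabs (T x) <= 1)
  (R1 : nat -> R)
  (HR : forall N, IG (fun t => Rpower t (a + INR N + 1 - 1) * T (b * ln t) * exp (- t)) (R1 N)) :
  is_lim_seq (fun N => R1 N / (INR (Factorial.fact N) * Rpower (INR N) a) - T (b * ln (INR N))) 0.
Proof.
  destruct (nat_above a) as [m [Hm Ham]].
  apply is_lim_seq_spec. intros eps.
  assert (HC : 0 < CC a b) by (unfold CC; generalize (Rabs_pos b); lra).
  assert (Hd : 0 < eps / (2 * CC a b)).
  { apply Rdiv_lt_0_compat. apply cond_pos. lra. }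
  assert (He2 : 0 < eps / 2) by (generalize (cond_pos eps); lra).
  destruct (proj2 (is_lim_seq_spec _ _) (EE_lim a b m _ Hd) (mkposreal _ He2)) as [N0 HN0].
  exists (max 1 N0). intros N HN.
  assert (HN1 : (1 <= N)%nat) by lia.
  assert (E := est a b Ha m Ham T HT1 HT2 N HN1 _ Hd (R1 N) (HR N)).
  assert (E2 := HN0 N ltac:(lia)). simpl in E2.
  assert (HNr : 0 < INR N) by (apply lt_0_INR; lia).
  set (D := INR (Factorial.fact N) * Rpower (INR N) a) in *.
  assert (HD : 0 < D).
  { unfold D. apply Rmult_lt_0_compat. apply lt_0_INR, Factorial.lt_O_fact. apply Rpower_pos. }
  set (X := R1 N - Rpower (INR N) a * T (b * ln (INR N)) * INR (Factorial.fact N)) in *.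
  replace (R1 N / D - T (b * ln (INR N)) - 0) with (X * / D) by (unfold X, D; field; split; [apply Rgt_not_eq, Rpower_pos | apply INR_fact_neq_0]).
  rewrite Rabs_mult, (Rabs_pos_eq (/ D)) by (left; apply Rinv_0_lt_compat; lra).
  replace (Rpower (INR N) a * INR (Factorial.fact N)) with D in E by (unfold D; ring).
  assert (E3 : Rabs X * / D <= EE a b m N (eps / (2 * CC a b))).
  { apply Rle_trans with (D * EE a b m N (eps / (2 * CC a b)) * / D).
    apply Rmult_le_compat_r. left; apply Rinv_0_lt_compat; lra. exact E.
    right. field. lra. }
  apply Rabs_def2 in E2.
  replace (CC a b * (eps / (2 * CC a b))) with (eps / 2) in E2 by (field; lra).
  lra.
Qed.

Lemma bnd0 (w P : nat -> R) : (forall n, Rabs (w n) <= 1) -> is_lim_seq P 0 ->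
  is_lim_seq (fun n => w n * P n) 0.
Proof.
  intros Hw HP.
  assert (HA := is_lim_seq_abs _ _ HP). simpl in HA. rewrite Rabs_R0 in HA.
  assert (HB := proj1 (is_lim_seq_opp _ _) HA). simpl in HB. rewrite Ropp_0 in HB.
  apply is_lim_seq_le_le with (fun n => - Rabs (P n)) (fun n => Rabs (P n)); auto.
  intros n. assert (Rabs (w n * P n) <= Rabs (P n)).
  { rewrite Rabs_mult. rewrite <- (Rmult_1_l (Rabs (P n))) at 2.
    apply Rmult_le_compat_r. apply Rabs_pos. apply Hw. }
  destruct (Rcase_abs (w n * P n)); [rewrite Rabs_left in H | rewrite Rabs_right in H];
    generalize (Rabs_pos (P n)); lra.
Qed.

Lemma asym a b (Ha : 0 < a) :
  is_lim_seq (fun N => Cmod (RInt_gen (cG (a + INR N + 1) b) F0 Finf,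
                             RInt_gen (sG (a + INR N + 1) b) F0 Finf)
                       / (INR (Factorial.fact N) * Rpower (INR N) a)) 1.
Proof.
  set (R1 := fun N => RInt_gen (cG (a + INR N + 1) b) F0 Finf).
  set (I1 := fun N => RInt_gen (sG (a + INR N + 1) b) F0 Finf).
  assert (Hp : forall N, 0 < a + INR N + 1) by (intro N; generalize (pos_INR N); lra).
  assert (HR : forall N, IG (fun t => Rpower t (a + INR N + 1 - 1) * cos (b * ln t) * exp (- t)) (R1 N)).
  { intro N. destruct (ex_cG _ b (Hp N)) as [l Hl]. exact (IG_RInt_gen _ _ Hl). }
  assert (HI : forall N, IG (fun t => Rpower t (a + INR N + 1 - 1) * sin (b * ln t) * exp (- t)) (I1 N)).
  { intro N. destruct (ex_sG _ b (Hp N)) as [l Hl]. exact (IG_RInt_gen _ _ Hl). }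
  assert (HP := PQ_lim a b Ha cos cos_lip (fun x => proj2 (Rabs_le_between _ _) (COS_bound x)) R1 HR).
  assert (HQ := PQ_lim a b Ha sin sin_lip (fun x => proj2 (Rabs_le_between _ _) (SIN_bound x)) I1 HI).
  set (D := fun N => INR (Factorial.fact N) * Rpower (INR N) a) in *.
  set (P := fun N => R1 N / D N - cos (b * ln (INR N))) in *.
  set (Q := fun N => I1 N / D N - sin (b * ln (INR N))) in *.
  apply is_lim_seq_ext_loc with
    (fun N => sqrt (1 + (2 * (cos (b * ln (INR N)) * P N) + P N * P N
                        + 2 * (sin (b * ln (INR N)) * Q N) + Q N * Q N))).
  - exists 1%nat. intros N HN.
    assert (HD : 0 < D N).
    { unfold D. apply Rmult_lt_0_compat. apply lt_0_INR, Factorial.lt_O_fact. apply Rpower_pos. }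
    unfold Cmod. simpl fst. simpl snd. fold (R1 N) (I1 N).
    replace (1 + (2 * (cos (b * ln (INR N)) * P N) + P N * P N + 2 * (sin (b * ln (INR N)) * Q N) + Q N * Q N))
      with ((R1 N ^ 2 + I1 N ^ 2) * (/ D N) ^ 2).
    2:{ unfold P, Q. generalize (sin2_cos2 (b * ln (INR N))). unfold Rsqr. intro E.
        rewrite <- E. field. lra. }
    rewrite sqrt_mult_alt by (generalize (pow2_ge_0 (R1 N)) (pow2_ge_0 (I1 N)); lra).
    rewrite sqrt_pow2 by (left; apply Rinv_0_lt_compat; lra). unfold D. reflexivity.
  - replace (Finite 1) with (Finite (sqrt 1)) by (rewrite sqrt_1; reflexivity).
    apply (is_lim_seq_continuous sqrt). apply continuity_pt_sqrt. lra.
    replace (Finite 1) with (Finite (1 + (2 * 0 + 0 * 0 + 2 * 0 + 0 * 0))) by (f_equal; ring).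
    assert (Hc : forall n, Rabs (cos (b * ln (INR n))) <= 1) by (intro n; apply Rabs_le, COS_bound).
    assert (Hs : forall n, Rabs (sin (b * ln (INR n))) <= 1) by (intro n; apply Rabs_le, SIN_bound).
    repeat apply is_lim_seq_plus'; try apply is_lim_seq_const;
      try (apply is_lim_seq_mult'; [apply is_lim_seq_const | ]);
      try (apply is_lim_seq_mult'; assumption).
    apply (bnd0 (fun n => cos (b * ln (INR n))) P Hc HP).
    apply (bnd0 (fun n => sin (b * ln (INR n))) Q Hs HQ).
Qed.

Lemma Gam_nz a b (Ha : 0 < a) :
  Cmod (RInt_gen (cG a b) F0 Finf, RInt_gen (sG a b) F0 Finf) <> 0.
Proof.
  intro H. apply Cmod_eq_0 in H.
  assert (H1 : RInt_gen (cG a b) F0 Finf = 0) by (apply (f_equal fst) in H; exact H).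
  assert (H2 : RInt_gen (sG a b) F0 Finf = 0) by (apply (f_equal snd) in H; exact H).
  assert (Z : forall n, IG (cG (a + INR n) b) 0 /\ IG (sG (a + INR n) b) 0).
  { induction n as [|n [IH1 IH2]].
    - simpl INR. rewrite Rplus_0_r. split.
      + destruct (ex_cG a b Ha) as [l Hl]. rewrite <- H1. exact (IG_RInt_gen _ _ Hl).
      + destruct (ex_sG a b Ha) as [l Hl]. rewrite <- H2. exact (IG_RInt_gen _ _ Hl).
    - assert (Hp : 0 < a + INR n) by (generalize (pos_INR n); lra).
      destruct (FE _ _ _ _ Hp IH1 IH2) as [K1 K2].
      rewrite S_INR, <- Rplus_assoc. split.
      + apply IG_val with ((a + INR n) * 0 - b * 0). exact K1. ring.
      + apply IG_val with ((a + INR n) * 0 + b * 0). exact K2. ring. }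
  assert (L := asym a b Ha).
  assert (L0 : is_lim_seq (fun N => Cmod (RInt_gen (cG (a + INR N + 1) b) F0 Finf,
                             RInt_gen (sG (a + INR N + 1) b) F0 Finf)
                       / (INR (Factorial.fact N) * Rpower (INR N) a)) 0).
  { apply is_lim_seq_ext with (fun _ => 0). 2: apply is_lim_seq_const.
    intro N. destruct (Z (S N)) as [Z1 Z2]. rewrite S_INR, <- Rplus_assoc in Z1, Z2.
    rewrite (IG_unique _ _ Z1), (IG_unique _ _ Z2).
    unfold Cmod. simpl fst. simpl snd. replace (0 ^ 2 + 0 ^ 2) with 0 by ring. rewrite sqrt_0. unfold Rdiv. ring. }
  apply is_lim_seq_unique in L. apply is_lim_seq_unique in L0. rewrite L in L0.
  injection L0. lra.
Qed.

Lemma ln_bnd p q : 0 < p -> 0 < q -> 1 - q / p <= ln p - ln q <= p / q - 1.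
Proof.
  intros Hp Hq. rewrite <- ln_div by auto. split.
  - assert (E : ln (p / q) = - ln (q / p)).
    { rewrite !ln_div by auto. ring. }
    rewrite E. generalize (exp_ineq1_le (ln (q / p))). rewrite exp_ln.
    lra. apply Rdiv_lt_0_compat; auto.
  - generalize (exp_ineq1_le (ln (p / q))). rewrite exp_ln. lra.
    apply Rdiv_lt_0_compat; auto.
Qed.

Lemma lim_ratio_inv k : is_lim_seq (fun N => INR N / (INR N + k)) 1.
Proof.
  apply is_lim_seq_ext_loc with (fun N => / ((INR N + k) / INR N)).
  - destruct (nat_above (Rabs k + 1)) as [n0 [_ Hn0]].
    exists (S n0). intros n Hn. assert (INR n > INR n0) by (apply lt_INR; lia).
    assert (0 < INR n) by (generalize (pos_INR n0); lra).
    assert (INR n + k <> 0) by (generalize (Rabs_pos k) (Rle_abs (- k)); rewrite Rabs_Ropp; intros; lra).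
    field. lra.
  - replace (Finite 1) with (Rbar_inv 1) by (simpl; f_equal; field).
    apply is_lim_seq_inv. apply lim_ratio. simpl. intro E; injection E; lra.
Qed.

Lemma lim_A c : 0 < c -> is_lim_seq (fun N => INR N * (ln (INR N + c + 1) - ln (INR N + 1))) c.
Proof.
  intro Hc.
  apply is_lim_seq_le_le_loc with (fun N => c * (INR N / (INR N + (c + 1)))) (fun N => c * (INR N / (INR N + 1))).
  - exists 1%nat. intros n Hn. assert (0 < INR n) by (apply lt_0_INR; lia).
    destruct (ln_bnd (INR n + c + 1) (INR n + 1)) as [B1 B2]; try lra.
    split.
    + replace (c * (INR n / (INR n + (c + 1)))) with (INR n * (1 - (INR n + 1) / (INR n + c + 1))) by (field; lra).
      apply Rmult_le_compat_l; lra.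
    + replace (c * (INR n / (INR n + 1))) with (INR n * ((INR n + c + 1) / (INR n + 1) - 1)) by (field; lra).
      apply Rmult_le_compat_l; lra.
  - replace (Finite c) with (Rbar_mult c 1) by (simpl; f_equal; ring).
    apply is_lim_seq_scal_l. apply lim_ratio_inv.
  - replace (Finite c) with (Rbar_mult c 1) by (simpl; f_equal; ring).
    apply is_lim_seq_scal_l. apply lim_ratio_inv.
Qed.

Lemma lim_B c : 0 < c -> is_lim_seq (fun N => (c + 1) * (ln (INR N + c + 1) - ln (INR N))) 0.
Proof.
  intro Hc.
  apply is_lim_seq_le_le_loc with (fun N => 0) (fun N => (c + 1) * ((c + 1) * / INR N)).
  - exists 1%nat. intros n Hn. assert (0 < INR n) by (apply lt_0_INR; lia).
    destruct (ln_bnd (INR n + c + 1) (INR n)) as [B1 B2]; try lra.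
    assert (0 <= ln (INR n + c + 1) - ln (INR n)).
    { assert (ln (INR n) < ln (INR n + c + 1)) by (apply ln_increasing; lra). lra. }
    split. apply Rmult_le_pos; lra.
    apply Rmult_le_compat_l. lra.
    replace ((c + 1) * / INR n) with ((INR n + c + 1) / INR n - 1) by (field; lra). lra.
  - apply is_lim_seq_const.
  - replace (Finite 0) with (Finite ((c + 1) * ((c + 1) * 0))) by (f_equal; ring).
    apply is_lim_seq_mult'. apply is_lim_seq_const. apply is_lim_seq_mult'. apply is_lim_seq_const.
    apply lim_invn.
Qed.

Lemma Gamma_congr (z : C) x y : Re z = x -> Im z = y ->
  Gamma z = (RInt_gen (cG x y) F0 Finf, RInt_gen (sG x y) F0 Finf).
Proof. intros H1 H2. unfold Gamma. rewrite H1, H2. reflexivity. Qed.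

Theorem lemma3p3 (lam A B : R) (z : C)
  (Hlam : 0 < lam) (HA : 0 < A) (HB : 0 < B) (Hz : B < Re z) :
  is_lim_seq
    (fun N : nat =>
       R_fact lam A B N z /
       (A * exp (lam * B * (1 - ln (lam * B)))
          / Rpower (INR N) (lam * (Re z - B) - 1)
          * Cmod (Gamma (Cmult (RtoC lam) z)) / (Re z - B)))
    1.
Proof.
  assert (Hc : 0 < lam * B) by (apply Rmult_lt_0_compat; auto).
  assert (Ha : 0 < lam * Re z) by (apply Rmult_lt_0_compat; lra).
  assert (Hac : lam * B < lam * Re z) by (apply Rmult_lt_compat_l; auto).
  assert (Hw : Gamma (Cmult (RtoC lam) z) =
    (RInt_gen (cG (lam * Re z) (lam * Im z)) F0 Finf, RInt_gen (sG (lam * Re z) (lam * Im z)) F0 Finf)).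
  { apply Gamma_congr; unfold Cmult, RtoC, Re, Im; simpl; ring. }
  assert (HwN : forall N, Gamma (Cplus (Cmult (RtoC lam) z) (RtoC (INR N + 1))) =
    (RInt_gen (cG (lam * Re z + INR N + 1) (lam * Im z)) F0 Finf,
     RInt_gen (sG (lam * Re z + INR N + 1) (lam * Im z)) F0 Finf)).
  { intro N. apply Gamma_congr; unfold Cplus, Cmult, RtoC, Re, Im; simpl; ring. }
  assert (H1 : forall N, Gamma (RtoC (INR N + 1)) = RtoC (INR (Factorial.fact N))).
  { intro N. rewrite (Gamma_congr _ (INR N + 1) 0) by reflexivity.
    destruct (Gam_nat N) as [K1 K2]. rewrite (IG_unique _ _ K1), (IG_unique _ _ K2). reflexivity. }
  set (a := lam * Re z) in *. set (b := lam * Im z) in *. set (c := lam * B) in *.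
  set (G := Cmod (RInt_gen (cG a b) F0 Finf, RInt_gen (sG a b) F0 Finf)).
  assert (HG : 0 < G).
  { generalize (Gam_nz a b Ha) (Cmod_ge_0 (RInt_gen (cG a b) F0 Finf, RInt_gen (sG a b) F0 Finf)).
    unfold G. lra. }
  set (CN := fun N => Cmod (RInt_gen (cG (a + INR N + 1) b) F0 Finf, RInt_gen (sG (a + INR N + 1) b) F0 Finf)).
  assert (HCN : forall N, 0 < CN N).
  { intro N. assert (0 < a + INR N + 1) by (generalize (pos_INR N); lra).
    generalize (Gam_nz _ b H) (Cmod_ge_0 (RInt_gen (cG (a + INR N + 1) b) F0 Finf,
      RInt_gen (sG (a + INR N + 1) b) F0 Finf)). unfold CN. lra. }
  set (L := fun N => INR N * (ln (INR N + c + 1) - ln (INR N + 1))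
                     + (c + 1) * (ln (INR N + c + 1) - ln (INR N)) - c).
  apply is_lim_seq_ext_loc with
    (fun N => / (CN N / (INR (Factorial.fact N) * Rpower (INR N) a)) * exp (L N)).
  - exists 1%nat. intros N HN.
    assert (HNr : 0 < INR N) by (apply lt_0_INR; lia).
    unfold R_fact. rewrite Hw, HwN, H1. fold c.
    assert (HY : Cmod (Cmult (RInt_gen (cG (a + INR N + 1) b) F0 Finf, RInt_gen (sG (a + INR N + 1) b) F0 Finf)
                             (RtoC (Re z - B))) <> 0).
    { rewrite Cmod_mult, Cmod_R, Rabs_pos_eq by lra. fold (CN N).
      generalize (HCN N). intro. apply Rgt_not_eq. apply Rmult_lt_0_compat; lra. }
    rewrite Cmod_div. 2:{ intro E. apply HY. rewrite E. apply Cmod_0. }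
    rewrite !Cmod_mult, !Cmod_R. fold G. fold (CN N).
    rewrite (Rabs_pos_eq (INR (Factorial.fact N))) by apply pos_INR.
    rewrite (Rabs_pos_eq (Re z - B)) by lra.
    rewrite <- (Rpower_pow N (INR N + 1)) by lra.
    assert (E1 : exp (c * (1 - ln c)) = exp c * / exp (c * ln c)).
    { rewrite <- exp_Ropp, <- exp_plus. f_equal. ring. }
    assert (E2 : exp ((lam * (Re z - B) - 1) * ln (INR N)) = exp (a * ln (INR N)) * / exp ((c + 1) * ln (INR N))).
    { rewrite <- exp_Ropp, <- exp_plus. f_equal. unfold a, c. ring. }
    assert (E3 : exp (L N) = exp ((INR N + c + 1) * ln (INR N + c + 1)) * / exp (INR N * ln (INR N + 1))
                   * / exp ((c + 1) * ln (INR N)) * / exp c).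
    { rewrite <- !exp_Ropp, <- !exp_plus. f_equal. unfold L. ring. }
    unfold Rpower. rewrite E1, E2, E3.
    assert (0 < INR (Factorial.fact N)) by apply INR_fact_lt_0.
    generalize (HCN N) (exp_pos c) (exp_pos (c * ln c)) (exp_pos (a * ln (INR N)))
      (exp_pos ((c + 1) * ln (INR N))) (exp_pos ((INR N + c + 1) * ln (INR N + c + 1)))
      (exp_pos (INR N * ln (INR N + 1))). intros.
    field. repeat split; lra.
  - replace (Finite 1) with (Finite (1 * exp 0)) by (rewrite exp_0; f_equal; ring).
    apply is_lim_seq_mult'.
    + replace 1 with (/ 1) by field.
      apply (is_lim_seq_inv _ 1). apply asym. exact Ha. intro E; injection E; lra.
    + apply (is_lim_seq_continuous exp). apply derivable_continuous_pt, derivable_pt_exp.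
      replace 0 with (c + 0 - c) by ring. unfold L.
      apply is_lim_seq_minus'. apply is_lim_seq_plus'. apply lim_A; auto. apply lim_B; auto.
      apply is_lim_seq_const.
Qed.
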